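(* Let $X\in\Sigma^*$. Then: (Monotonicity) for all $\ell'\le\ell\le r\le r'$ in $[0,|X|]$, $\mathrm{selfed}(X[\ell\,.\,.\,r))\le\mathrm{selfed}(X[\ell'\,.\,.\,r'))$; (Sub-additivity) for every $m\in[0,|X|]$, $\mathrm{selfed}(X)\le\mathrm{selfed}(X[0\,.\,.\,m))+\mathrm{selfed}(X[m\,.\,.\,|X|))$; (Triangle inequality) for every $Y\in\Sigma^*$, $\mathrm{selfed}(Y)\le\mathrm{selfed}(X)+2\,\mathrm{ed}(X,Y)$.
   Context: $X[i\,.\,.\,j)$ denotes the fragment $X[i]\cdots X[j-1]$. $\mathrm{ed}$ is the unweighted (Levenshtein) edit distance. An alignment of $X$ onto $X$ is a monotone lattice path from $(0,0)$ to $(|X|,|X|)$ with steps $(1,0)$, $(0,1)$, $(1,1)$; its unweighted cost counts steps $(1,0)$, $(0,1)$, and steps $(x,y)\to(x+1,y+1)$ with $X[x]\ne X[y]$. A self-alignment of $X$ is such a path that contains no step $(x,x)\to(x+1,x+1)$ (i.e., never aligns a character to itself); $\mathrm{selfed}(X)$ is the minimum unweighted cost of a self-alignment of $X$. *)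

(* Defs.v *)
From mathcomp Require Import all_boot.
From mathcomp Require Import boolp.

Set Implicit Arguments.
Unset Strict Implicit.
Unset Printing Implicit Defensive.

(* A monotone lattice path from (0,0) is encoded by its sequence of steps:
   Hs = (1,0), Vs = (0,1), Ds = (1,1). *)
Inductive step := Hs | Vs | Ds.

Definition isH (s : step) := if s is Hs then true else false.
Definition isV (s : step) := if s is Vs then true else false.
Definition isD (s : step) := if s is Ds then true else false.

Definition frag {T : Type} (X : seq T) (i j : nat) : seq T :=
  take (j - i) (drop i X).

Section Align.
Variable T : eqType.

Definition is_alignment (X Y : seq T) (p : seq step) : bool :=
  (count isH p + count isD p == size X) && (count isV p + count isD p == size Y).

Fixpoint acost (X Y : seq T) (x y : nat) (p : seq step) : nat :=
  match p with
  | [::] => 0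
  | Hs :: p' => (acost X Y x.+1 y p').+1
  | Vs :: p' => (acost X Y x y.+1 p').+1
  | Ds :: p' => (onth X x != onth Y y) + acost X Y x.+1 y.+1 p'
  end.

Definition cost (X Y : seq T) (p : seq step) := acost X Y 0 0 p.

Fixpoint no_self_diag (x y : nat) (p : seq step) : bool :=
  match p with
  | [::] => true
  | Hs :: p' => no_self_diag x.+1 y p'
  | Vs :: p' => no_self_diag x y.+1 p'
  | Ds :: p' => (x != y) && no_self_diag x.+1 y.+1 p'
  end.

Definition is_self_alignment (X : seq T) (p : seq step) : bool :=
  is_alignment X X p && no_self_diag 0 0 p.

Definition trivial_path (X Y : seq T) := nseq (size X) Hs ++ nseq (size Y) Vs.

Lemma count_trivial (X Y : seq T) :
  [/\ count isH (trivial_path X Y) = size X,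
      count isV (trivial_path X Y) = size Y &
      count isD (trivial_path X Y) = 0].
Proof.
rewrite /trivial_path !count_cat !count_nseq /= !mul1n !mul0n !addn0.
by split.
Qed.

Lemma nsd_trivial x y n m : no_self_diag x y (nseq n Hs ++ nseq m Vs).
Proof.
elim: n x => [|n IH] x /=; last exact: IH.
by elim: m y => [|m IH] y //=.
Qed.

Lemma ed_exists (X Y : seq T) :
  exists k, `[< exists p, is_alignment X Y p /\ cost X Y p = k >].
Proof.
exists (cost X Y (trivial_path X Y)); apply/asboolP.
exists (trivial_path X Y); split => //.
rewrite /is_alignment; by case: (count_trivial X Y) => -> -> ->; rewrite !addn0 !eqxx.
Qed.

Lemma selfed_exists (X : seq T) :
  exists k, `[< exists p, is_self_alignment X p /\ cost X X p = k >].
Proof.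
exists (cost X X (trivial_path X X)); apply/asboolP.
exists (trivial_path X X); split => //.
rewrite /is_self_alignment nsd_trivial andbT.
rewrite /is_alignment; by case: (count_trivial X X) => -> -> ->; rewrite !addn0 !eqxx.
Qed.

Definition ed (X Y : seq T) : nat := ex_minn (ed_exists X Y).

Definition selfed (X : seq T) : nat := ex_minn (selfed_exists X).

End Align.

(* Main.v *)
Require Import Defs.
From mathcomp Require Import all_boot.
From mathcomp Require Import boolp.
From mathcomp Require Import zify.

Set Implicit Arguments.
Unset Strict Implicit.
Unset Printing Implicit Defensive.

Section H.
Variable T : eqType.
Implicit Types X Y Z W : seq T.

Definition cntX (p : seq step) := count isH p + count isD p.
Definition cntY (p : seq step) := count isV p + count isD p.

Lemma cntX_cons s p : cntX (s :: p) = (~~ isV s) + cntX p.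
Proof. by case: s; rewrite /cntX /=; lia. Qed.
Lemma cntY_cons s p : cntY (s :: p) = (~~ isH s) + cntY p.
Proof. by case: s; rewrite /cntY /=; lia. Qed.

Lemma onth_drop X i x : onth (drop i X) x = onth X (i + x).
Proof. by rewrite !onthE map_drop nth_drop. Qed.
Lemma onth_take X i x : x < i -> onth (take i X) x = onth X x.
Proof. by move=> h; rewrite !onthE map_take nth_take. Qed.

Fixpoint endp x y (p : seq step) : nat * nat :=
  match p with
  | [::] => (x, y)
  | Hs :: p => endp x.+1 y p
  | Vs :: p => endp x y.+1 p
  | Ds :: p => endp x.+1 y.+1 p
  end.

Lemma endpE x y p : endp x y p = (x + cntX p, y + cntY p).
Proof.
elim: p x y => [|s p IH] x y /=; first by rewrite /cntX /cntY /= !addn0.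
by case: s; rewrite IH cntX_cons cntY_cons /=; congr pair; lia.
Qed.

Lemma acost_cat X Y x y p q :
  acost X Y x y (p ++ q) = acost X Y x y p + acost X Y (endp x y p).1 (endp x y p).2 q.
Proof.
elim: p x y => [|s p IH] x y //=.
by case: s => /=; rewrite IH // addnA.
Qed.

Lemma nsd_cat x y p q :
  no_self_diag x y (p ++ q) = no_self_diag x y p && no_self_diag (endp x y p).1 (endp x y p).2 q.
Proof.
elim: p x y => [|s p IH] x y //=.
by case: s => /=; rewrite IH // andbA.
Qed.

Lemma acost_shift X Y i j x y p :
  acost X Y (i + x) (j + y) p = acost (drop i X) (drop j Y) x y p.
Proof.
elim: p x y => [|s p IH] x y //=.
case: s => /=; rewrite -?IH ?onth_drop ?addnS //.
Qed.

Lemma nsd_shift i x y p : no_self_diag (i + x) (i + y) p = no_self_diag x y p.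
Proof.
elim: p x y => [|s p IH] x y //=.
by case: s => /=; rewrite -?addnS IH ?eqn_add2l.
Qed.

Lemma acost_take X Y i j x y p : x + cntX p <= i -> y + cntY p <= j ->
  acost X Y x y p = acost (take i X) (take j Y) x y p.
Proof.
elim: p x y => [|s p IH] x y //=.
case: s; rewrite cntX_cons cntY_cons /= => h1 h2.
- by rewrite (IH x.+1 y) //; lia.
- by rewrite (IH x y.+1) //; lia.
- rewrite (IH x.+1 y.+1); try lia. rewrite !onth_take //; lia.
Qed.

Lemma selfed_le X p : is_self_alignment X p -> selfed X <= cost X X p.
Proof.
rewrite /selfed; case: ex_minnP => m _ H Hp; apply: H; apply/asboolP; by exists p.
Qed.

Lemma selfed_opt X : exists p, is_self_alignment X p /\ cost X X p = selfed X.
Proof. rewrite /selfed; case: ex_minnP => m /asboolP H _; exact H. Qed.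

Lemma ed_opt X Y : exists p, is_alignment X Y p /\ cost X Y p = ed X Y.
Proof. rewrite /ed; case: ex_minnP => m /asboolP H _; exact H. Qed.

Lemma is_alignmentE X Y p : is_alignment X Y p = (cntX p == size X) && (cntY p == size Y).
Proof. by []. Qed.


Lemma cntX_cat p q : cntX (p ++ q) = cntX p + cntX q.
Proof. rewrite /cntX !count_cat; lia. Qed.
Lemma cntY_cat p q : cntY (p ++ q) = cntY p + cntY q.
Proof. rewrite /cntY !count_cat; lia. Qed.

Lemma subadd X m : m <= size X -> selfed X <= selfed (take m X) + selfed (drop m X).
Proof.
move=> hm.
have [p1 [/andP[a1 n1] c1]] := selfed_opt (take m X).
have [p2 [/andP[a2 n2] c2]] := selfed_opt (drop m X).
move: a1 a2; rewrite !is_alignmentE size_takel // size_drop.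
move=> /andP[/eqP e1 /eqP e1'] /andP[/eqP e2 /eqP e2'].
rewrite -c1 -c2; apply: leq_trans (selfed_le (p := p1 ++ p2) _) _.
- rewrite /is_self_alignment is_alignmentE cntX_cat cntY_cat e1 e1' e2 e2' subnKC // eqxx /=.
  rewrite nsd_cat endpE /= e1 e1' n1 /=. have := nsd_shift m 0 0 p2. rewrite addn0 =>->. done.
- rewrite /cost/= acost_cat endpE /= e1 e1'.
  have := acost_shift X X m m 0 0 p2; rewrite !addn0 => ->.
  rewrite /cost (acost_take X X (i:=m) (j:=m) (x:=0) (y:=0) (p:=p1)) ?e1 ?e1' //.
Qed.

Fixpoint clipF (x y : nat) (p : seq step) : seq step :=
  match p with
  | [::] => [::]
  | Hs :: p => if x == 0 then clipF 1 y p else Hs :: clipF x.+1 y p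
  | Vs :: p => if y == 0 then clipF x 1 p else Vs :: clipF x y.+1 p
  | Ds :: p => if x == 0 then (if y == 0 then clipF 1 1 p else Vs :: clipF 1 y.+1 p)
               else if y == 0 then Hs :: clipF x.+1 1 p else Ds :: clipF x.+1 y.+1 p
  end.

Lemma clipF_cost W Z p : forall x y u v, (forall i, onth W i = onth Z i.+1) ->
  no_self_diag x y p -> u = x.-1 -> v = y.-1 ->
  acost W W u v (clipF x y p) <= acost Z Z x y p + (minn 1 (maxn x y) - minn 1 (minn x y)).
Proof.
elim: p => [|s p IH] x y u v hW /=; first by lia.
case: s => /=.
- move=> hn hu hv; case: ifP => /eqP h1 /=; try subst x; try subst y.
  + have := IH 1 y u v hW hn ltac:(lia) ltac:(lia); lia.
  + have := IH x.+1 y u.+1 v hW hn ltac:(lia) ltac:(lia); lia.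
- move=> hn hu hv; case: ifP => /eqP h1 /=; try subst x; try subst y.
  + have := IH x 1 u v hW hn ltac:(lia) ltac:(lia); lia.
  + have := IH x y.+1 u v.+1 hW hn ltac:(lia) ltac:(lia); lia.
- move=> /andP[/eqP hxy hn] hu hv; case: ifP => /eqP h1 /=; try subst x; try subst y.
  + case: ifP => /eqP h2 /=; try subst y; first by lia.
    have := IH 1 y.+1 u v.+1 hW hn ltac:(lia) ltac:(lia); lia.
  + case: ifP => /eqP h2 /=; try subst y.
    * have := IH x.+1 1 u.+1 v hW hn ltac:(lia) ltac:(lia); lia.
    * have := IH x.+1 y.+1 u.+1 v.+1 hW hn ltac:(lia) ltac:(lia).
      have -> : onth W u = onth Z x by rewrite hW; congr onth; lia.
      have -> : onth W v = onth Z y by rewrite hW; congr onth; lia.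
      lia.
Qed.

Lemma clipF_cntX p : forall x y, cntX (clipF x y p) = cntX p - (1 - minn 1 x).
Proof.
elim: p => [|s p IH] x y /=; first by [].
case: s => /=; rewrite ?cntX_cons /=.
- by case: ifP => /eqP h1 /=; rewrite ?cntX_cons IH /=; lia.
- by case: ifP => /eqP h1 /=; rewrite ?cntX_cons IH /=; lia.
- case: ifP => /eqP h1 /=; case: ifP => /eqP h2 /=; rewrite ?cntX_cons IH /=; lia.
Qed.

Lemma clipF_cntY p : forall x y, cntY (clipF x y p) = cntY p - (1 - minn 1 y).
Proof.
elim: p => [|s p IH] x y /=; first by [].
case: s => /=; rewrite ?cntY_cons /=.
- by case: ifP => /eqP h1 /=; rewrite ?cntY_cons IH /=; lia.
- by case: ifP => /eqP h1 /=; rewrite ?cntY_cons IH /=; lia.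
- case: ifP => /eqP h1 /=; case: ifP => /eqP h2 /=; rewrite ?cntY_cons IH /=; lia.
Qed.

Lemma clipF_nsd p : forall x y u v, no_self_diag x y p -> u = x.-1 -> v = y.-1 ->
  no_self_diag u v (clipF x y p).
Proof.
elim: p => [|s p IH] x y u v //=.
case: s => /=.
- move=> hn hu hv; case: ifP => /eqP h1 /=; try subst x; try subst y.
  + by apply: (IH _ _ _ _ hn); lia.
  + by apply: (IH _ _ _ _ hn); lia.
- move=> hn hu hv; case: ifP => /eqP h1 /=; try subst x; try subst y.
  + by apply: (IH _ _ _ _ hn); lia.
  + by apply: (IH _ _ _ _ hn); lia.
- move=> /andP[/eqP hxy hn] hu hv; case: ifP => /eqP h1 /=; try subst x; try subst y.
  + case: ifP => /eqP h2 /=; try subst y; first by apply: (IH _ _ _ _ hn); lia.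
    by apply: (IH _ _ _ _ hn); lia.
  + case: ifP => /eqP h2 /=; try subst y; first by apply: (IH _ _ _ _ hn); lia.
    apply/andP; split; last by apply: (IH _ _ _ _ hn); lia.
    apply/eqP; lia.
Qed.

Lemma selfed_behead Z : selfed (behead Z) <= selfed Z.
Proof.
have [p [/andP[a n] c]] := selfed_opt Z.
move: a; rewrite is_alignmentE => /andP[/eqP e1 /eqP e2].
rewrite -c; apply: leq_trans (selfed_le (p := clipF 0 0 p) _) _.
- rewrite /is_self_alignment is_alignmentE clipF_cntX clipF_cntY e1 e2 size_behead.
  rewrite (clipF_nsd n) // andbT; apply/andP; split; apply/eqP; lia.
- have := clipF_cost (W := behead Z) (Z := Z) (x := 0) (y := 0) (u := 0) (v := 0) _ n erefl erefl.
  rewrite /cost => H; apply: leq_trans (H _) _; last lia.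
  by case: (Z) => [|z Z0] i /=; rewrite ?onth0n.
Qed.


Fixpoint clipL (n x y : nat) (p : seq step) : seq step :=
  match p with
  | [::] => [::]
  | Hs :: p => if x.+1 < n then Hs :: clipL n x.+1 y p else clipL n x.+1 y p
  | Vs :: p => if y.+1 < n then Vs :: clipL n x y.+1 p else clipL n x y.+1 p
  | Ds :: p => if x.+1 < n then (if y.+1 < n then Ds :: clipL n x.+1 y.+1 p
                                 else Hs :: clipL n x.+1 y.+1 p)
               else if y.+1 < n then Vs :: clipL n x.+1 y.+1 p else clipL n x.+1 y.+1 p
  end.

Lemma clipL_cost W Z N p : forall x y u v, (forall i, i < N -> onth W i = onth Z i) ->
  x + cntX p = N.+1 -> y + cntY p = N.+1 ->
  no_self_diag x y p -> u = minn x N -> v = minn y N ->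
  acost W W u v (clipL N.+1 x y p) + (minn 1 (N.+1 - minn x y) - minn 1 (N.+1 - maxn x y))
  <= acost Z Z x y p.
Proof.
elim: p => [|s p IH] x y u v hW /=.
  by rewrite /cntX /cntY /=; lia.
case: s; rewrite cntX_cons cntY_cons /=.
- move=> ex ey hn hu hv; case: ifP => h1 /=.
  + have := IH x.+1 y u.+1 v hW ltac:(lia) ltac:(lia) hn ltac:(lia) ltac:(lia); lia.
  + have := IH x.+1 y u v hW ltac:(lia) ltac:(lia) hn ltac:(lia) ltac:(lia); lia.
- move=> ex ey hn hu hv; case: ifP => h1 /=.
  + have := IH x y.+1 u v.+1 hW ltac:(lia) ltac:(lia) hn ltac:(lia) ltac:(lia); lia.
  + have := IH x y.+1 u v hW ltac:(lia) ltac:(lia) hn ltac:(lia) ltac:(lia); lia.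
- move=> ex ey /andP[/eqP hxy hn] hu hv; case: ifP => h1 /=.
  + case: ifP => h2 /=.
    * have := IH x.+1 y.+1 u.+1 v.+1 hW ltac:(lia) ltac:(lia) hn ltac:(lia) ltac:(lia).
      have -> : onth W u = onth Z x by rewrite hW; [congr onth; lia | lia].
      have -> : onth W v = onth Z y by rewrite hW; [congr onth; lia | lia].
      lia.
    * have := IH x.+1 y.+1 u.+1 v hW ltac:(lia) ltac:(lia) hn ltac:(lia) ltac:(lia); lia.
  + case: ifP => h2 /=.
    * have := IH x.+1 y.+1 u v.+1 hW ltac:(lia) ltac:(lia) hn ltac:(lia) ltac:(lia); lia.
    * lia.
Qed.

Lemma clipL_cntX n p : forall x y, x + cntX p = n -> cntX (clipL n x y p) = (cntX p).-1.
Proof.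
elim: p => [|s p IH] x y //=.
case: s; rewrite cntX_cons /= => ex.
- by case: ifP => h1 /=; rewrite ?cntX_cons IH /=; lia.
- by case: ifP => h1 /=; rewrite ?cntX_cons IH /=; lia.
- case: ifP => h1 /=; case: ifP => h2 /=; rewrite ?cntX_cons IH /=; lia.
Qed.

Lemma clipL_cntY n p : forall x y, y + cntY p = n -> cntY (clipL n x y p) = (cntY p).-1.
Proof.
elim: p => [|s p IH] x y //=.
case: s; rewrite cntY_cons /= => ey.
- by case: ifP => h1 /=; rewrite ?cntY_cons IH /=; lia.
- by case: ifP => h1 /=; rewrite ?cntY_cons IH /=; lia.
- case: ifP => h1 /=; case: ifP => h2 /=; rewrite ?cntY_cons IH /=; lia.
Qed.

Lemma clipL_nsd N p : forall x y u v, no_self_diag x y p -> u = minn x N -> v = minn y N ->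
  no_self_diag u v (clipL N.+1 x y p).
Proof.
elim: p => [|s p IH] x y u v //=.
case: s => /=.
- by move=> hn hu hv; case: ifP => h1 /=; apply: (IH _ _ _ _ hn); lia.
- by move=> hn hu hv; case: ifP => h1 /=; apply: (IH _ _ _ _ hn); lia.
- move=> /andP[/eqP hxy hn] hu hv; case: ifP => h1 /=; case: ifP => h2 /=;
    try (by apply: (IH _ _ _ _ hn); lia).
  apply/andP; split; last by apply: (IH _ _ _ _ hn); lia.
  apply/eqP; lia.
Qed.

Lemma selfed_take1 Z N : size Z = N.+1 -> selfed (take N Z) <= selfed Z.
Proof.
move=> hs.
have [p [/andP[a n] c]] := selfed_opt Z.
move: a; rewrite is_alignmentE => /andP[/eqP e1 /eqP e2].
rewrite -c; apply: leq_trans (selfed_le (p := clipL N.+1 0 0 p) _) _.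
- rewrite /is_self_alignment is_alignmentE.
  rewrite (@clipL_cntX N.+1 p 0 0) ?e1 ?hs //.
  rewrite (@clipL_cntY N.+1 p 0 0) ?e2 ?hs //.
  rewrite size_takel ?hs // eqxx /=.
  apply: (clipL_nsd (N := N) n); lia.
- have H := @clipL_cost (take N Z) Z N p 0 0 0 0.
  rewrite /cost; apply: leq_trans _ (H _ _ _ n _ _); try lia.
  + by move=> i hi; rewrite onth_take.
Qed.


Lemma selfed_take Z k : selfed (take k Z) <= selfed Z.
Proof.
have key : forall d, selfed (take (size Z - d) Z) <= selfed Z.
  elim=> [|d IH]; first by rewrite subn0 take_size.
  case E: (size Z - d) => [|M].
  - have -> : size Z - d.+1 = 0 by lia.
    by move: IH; rewrite E.
  - have -> : size Z - d.+1 = M by lia.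
    apply: leq_trans IH; rewrite E.
    rewrite -(@take_takel _ M M.+1) //.
    apply: selfed_take1; rewrite size_takel //; lia.
case: (leqP k (size Z)) => hk.
- by have -> : k = size Z - (size Z - k) by lia.
- by rewrite take_oversize //; lia.
Qed.

Lemma selfed_drop Z k : selfed (drop k Z) <= selfed Z.
Proof.
elim: k => [|k IH]; first by rewrite drop0.
apply: leq_trans IH.
by rewrite -add1n -drop_drop drop1 selfed_behead.
Qed.

Lemma frag_frag X l' l r r' : l' <= l -> l <= r -> r <= r' ->
  frag X l r = take (r - l) (drop (l - l') (frag X l' r')).
Proof.
move=> h1 h2 h3; rewrite /frag.
have -> : r' - l' = (r' - l) + (l - l') by lia.
rewrite -take_drop drop_drop subnK // take_takel //; lia.
Qed.

Lemma part1 X l' l r r' : l' <= l -> l <= r -> r <= r' ->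
  selfed (frag X l r) <= selfed (frag X l' r').
Proof.
move=> h1 h2 h3; rewrite (frag_frag X h1 h2 h3).
apply: leq_trans (selfed_take _ _) _; exact: selfed_drop.
Qed.

Lemma part2 X m : m <= size X ->
  selfed X <= selfed (frag X 0 m) + selfed (frag X m (size X)).
Proof.
move=> hm; rewrite /frag drop0 subn0.
have -> : take (size X - m) (drop m X) = drop m X by rewrite take_oversize // size_drop.
exact: subadd.
Qed.

End H.
Fixpoint comp (p q : seq step) {struct p} : seq step :=
  match p with
  | [::] => q
  | s :: p' =>
    (fix comp2 (q : seq step) : seq step :=
      match s, q with
      | Hs, _ => Hs :: comp p' q
      | _, Vs :: q' => Vs :: comp2 q'
      | _, [::] => s :: p'
      | Vs, Hs :: q' => comp p' q'
      | Vs, Ds :: q' => Vs :: comp p' q'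
      | Ds, Hs :: q' => Hs :: comp p' q'
      | Ds, Ds :: q' => Ds :: comp p' q'
      end) q
  end.

Lemma comp_H p q : comp (Hs :: p) q = Hs :: comp p q. Proof. by case: q => [|[]]. Qed.
Lemma comp_V s p q : s <> Hs -> comp (s :: p) (Vs :: q) = Vs :: comp (s :: p) q.
Proof. by case: s. Qed.
Lemma comp_VH p q : comp (Vs :: p) (Hs :: q) = comp p q. Proof. by []. Qed.
Lemma comp_VD p q : comp (Vs :: p) (Ds :: q) = Vs :: comp p q. Proof. by []. Qed.
Lemma comp_DH p q : comp (Ds :: p) (Hs :: q) = Hs :: comp p q. Proof. by []. Qed.
Lemma comp_DD p q : comp (Ds :: p) (Ds :: q) = Ds :: comp p q. Proof. by []. Qed.

Section P3.
Variable T : eqType.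
Implicit Types X Y Z : seq T.

Definition swapS s := match s with Hs => Vs | Vs => Hs | Ds => Ds end.
Definition swapP p := map swapS p.

Lemma acost_swap X Y p : forall x y, acost Y X y x (swapP p) = acost X Y x y p.
Proof. by elim: p => [|[] p IH] x y //=; rewrite IH // eq_sym. Qed.
Lemma cntX_swap p : cntX (swapP p) = cntY p.
Proof. by elim: p => [|s p IH] //=; rewrite cntX_cons cntY_cons IH; case: s. Qed.
Lemma cntY_swap p : cntY (swapP p) = cntX p.
Proof. by elim: p => [|s p IH] //=; rewrite cntX_cons cntY_cons IH; case: s. Qed.

Fixpoint diags (x y : nat) (p : seq step) : seq (nat * nat) :=
  match p with
  | [::] => [::]
  | Hs :: p => diags x.+1 y p
  | Vs :: p => diags x y.+1 p
  | Ds :: p => (x, y) :: diags x.+1 y.+1 p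
  end.

Lemma nsd_diags p : forall x y, no_self_diag x y p = all (fun ab => ab.1 != ab.2) (diags x y p).
Proof. by elim: p => [|[] p IH] x y //=; rewrite IH. Qed.

Lemma diags_swap p : forall x y a b, ((a, b) \in diags y x (swapP p)) = ((b, a) \in diags x y p).
Proof.
elim: p => [|[] p IH] x y a b //=; rewrite ?IH //.
by rewrite !in_cons IH !xpair_eqE andbC.
Qed.

Lemma diags_ge p : forall x y a b, (a, b) \in diags x y p -> y <= b.
Proof.
elim: p => [|[] p IH] x y a b //=.
- by move/IH.
- by move/IH; lia.
- rewrite in_cons xpair_eqE => /orP[/andP[_ /eqP->] // | /IH]; lia.
Qed.

Lemma diags_inj p : forall x y a a' b, (a, b) \in diags x y p -> (a', b) \in diags x y p -> a = a'.
Proof.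
elim: p => [|[] p IH] x y a a' b //=; try exact: IH.
rewrite !in_cons !xpair_eqE.
move=> /orP[/andP[/eqP h1 /eqP h2] | h1] /orP[/andP[/eqP h3 /eqP h4] | h3]; try lia.
- have := diags_ge h3; lia.
- have := diags_ge h1; lia.
- exact: IH h1 h3.
Qed.

Lemma cntX0 s p : cntX (s :: p) = 0 -> s = Vs /\ cntX p = 0.
Proof. by rewrite cntX_cons; case: s. Qed.

Lemma diags_cntX0 p : forall x y, cntX p = 0 -> diags x y p = [::].
Proof. by elim: p => [|s p IH] x y // /cntX0 [-> h] /=; rewrite IH. Qed.

Lemma acost_cntX0 X Y p : forall x y, cntX p = 0 -> acost X Y x y p = size p.
Proof. by elim: p => [|s p IH] x y // /cntX0 [-> h] /=; rewrite IH. Qed.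

Lemma comp_cost X Y Z p : forall q x y z, cntY p = cntX q ->
  acost X Z x z (comp p q) <= acost X Y x y p + acost Y Z y z q.
Proof.
elim: p => [|s p IHp] q x y z.
  by move=> /= h; rewrite !acost_cntX0.
elim: q z => [|t q IHq] z.
  case: s; rewrite cntY_cons /cntX /= => h; try lia.
  by have /= := IHp [::] x.+1 y z ltac:(rewrite /cntX /=; lia); lia.
case: s IHq => IHq.
- move=> h; rewrite comp_H; have := IHp (t :: q) x.+1 y z ltac:(move: h; rewrite cntY_cons /=; lia).
  by case: (t) => /=; lia.
- case: t.
  + rewrite comp_VH cntY_cons cntX_cons /= => h; have := IHp q x y.+1 z ltac:(lia); lia.
  + rewrite comp_V // cntX_cons /= => h; have := IHq z.+1 h; simpl; lia.
  + rewrite comp_VD cntY_cons cntX_cons /= => h; have := IHp q x y.+1 z.+1 ltac:(lia); lia.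
- case: t.
  + rewrite comp_DH cntY_cons cntX_cons /= => h; have := IHp q x.+1 y.+1 z ltac:(lia); lia.
  + rewrite comp_V // cntX_cons /= => h; have := IHq z.+1 h; simpl; lia.
  + rewrite comp_DD cntY_cons cntX_cons /= => h; have := IHp q x.+1 y.+1 z.+1 ltac:(lia).
    case: (onth X x =P onth Y y) => [->|] /=; lia.
Qed.

Lemma cntXH p : cntX (Hs :: p) = (cntX p).+1. Proof. by rewrite cntX_cons. Qed.
Lemma cntXV p : cntX (Vs :: p) = cntX p. Proof. by rewrite cntX_cons. Qed.
Lemma cntXD p : cntX (Ds :: p) = (cntX p).+1. Proof. by rewrite cntX_cons. Qed.
Lemma cntYH p : cntY (Hs :: p) = cntY p. Proof. by rewrite cntY_cons. Qed.
Lemma cntYV p : cntY (Vs :: p) = (cntY p).+1. Proof. by rewrite cntY_cons. Qed.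
Lemma cntYD p : cntY (Ds :: p) = (cntY p).+1. Proof. by rewrite cntY_cons. Qed.
Lemma cntX0' : cntX [::] = 0. Proof. by []. Qed.
Lemma cntY0' : cntY [::] = 0. Proof. by []. Qed.

Lemma comp_cnt p : forall q, cntY p = cntX q -> cntX (comp p q) = cntX p /\ cntY (comp p q) = cntY q.
Proof.
elim: p => [|s p IHp] q.
  by move=> /= h.
elim: q => [|t q IHq].
  case: s => h; rewrite ?cntYH ?cntYV ?cntYD cntX0' in h; try lia.
  rewrite comp_H; have := IHp [::] ltac:(rewrite cntX0'; lia).
  by rewrite !cntXH !cntYH cntY0'; lia.
case: s IHq => IHq.
- rewrite comp_H !cntYH !cntXH => h; have := IHp (t :: q) h; rewrite ?cntXH ?cntXV ?cntXD ?cntYH ?cntYV ?cntYD; lia.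
- case: t IHq => IHq.
  + rewrite comp_VH !cntYV !cntXH => h; have := IHp q ltac:(lia); rewrite ?cntXH ?cntXV ?cntXD ?cntYH ?cntYV ?cntYD; lia.
  + rewrite comp_V // cntXV !cntYV => h; have := IHq h; rewrite ?cntXH ?cntXV ?cntXD ?cntYH ?cntYV ?cntYD; lia.
  + rewrite comp_VD !cntYV !cntXD !cntYD => h; have := IHp q ltac:(lia); rewrite ?cntXH ?cntXV ?cntXD ?cntYH ?cntYV ?cntYD; lia.
- case: t IHq => IHq.
  + rewrite comp_DH !cntYD !cntXH !cntXD !cntYH => h; have := IHp q ltac:(lia); rewrite ?cntXH ?cntXV ?cntXD ?cntYH ?cntYV ?cntYD; lia.
  + rewrite comp_V // cntXV !cntYV => h; have := IHq h; rewrite ?cntXH ?cntXV ?cntXD ?cntYH ?cntYV ?cntYD; lia.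
  + rewrite comp_DD !cntYD !cntXD => h; have := IHp q ltac:(lia); rewrite ?cntXH ?cntXV ?cntXD ?cntYH ?cntYV ?cntYD; lia.
Qed.

Lemma diags_comp p : forall q x y z a b, cntY p = cntX q ->
  (a, b) \in diags x z (comp p q) ->
  exists c, (a, c) \in diags x y p /\ (c, b) \in diags y z q.
Proof.
elim: p => [|s p IHp] q x y z a b.
  by move=> /= h; rewrite diags_cntX0.
elim: q z => [|t q IHq] z.
  case: s => h; rewrite ?cntYH ?cntYV ?cntYD cntX0' in h; try lia.
  rewrite comp_H /= => /(IHp [::] x.+1 y z a b); apply; by rewrite cntX0'.
case: s IHq => IHq.
- move=> h; rewrite comp_H /= => /(IHp (t :: q) x.+1 y z a b); apply.
  by rewrite -h cntYH.
- case: t IHq => IHq h.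
  + rewrite comp_VH => /(IHp q x y.+1 z a b); apply.
    by move: h; rewrite cntYV cntXH => -[].
  + rewrite comp_V // /= => /(IHq z.+1); apply; by rewrite h cntXV.
  + rewrite comp_VD /= => /(IHp q x y.+1 z.+1 a b) [|c [h1 h2]].
      by move: h; rewrite cntYV cntXD => -[].
    by exists c; rewrite /= in_cons h1 h2 orbT.
- case: t IHq => IHq h.
  + rewrite comp_DH /= => /(IHp q x.+1 y.+1 z a b) [|c [h1 h2]].
      by move: h; rewrite cntYD cntXH => -[].
    by exists c; rewrite /= in_cons h1 h2 orbT.
  + rewrite comp_V // /= => /(IHq z.+1); apply; by rewrite h cntXV.
  + rewrite comp_DD /= in_cons xpair_eqE => /orP[/andP[/eqP -> /eqP ->]|].
      by exists y; rewrite !in_cons !eqxx.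
    move=> /(IHp q x.+1 y.+1 z.+1 a b) [|c [h1 h2]].
      by move: h; rewrite cntYD cntXD => -[].
    by exists c; rewrite !in_cons h1 h2 !orbT.
Qed.

Lemma part3 X Y : selfed Y <= selfed X + 2 * ed X Y.
Proof.
have [B [aB cB]] := ed_opt X Y.
have [A [/andP[aA nA] cA]] := selfed_opt X.
move: aB aA; rewrite !is_alignmentE => /andP[/eqP bX /eqP bY] /andP[/eqP aX /eqP aY].
have h1 : cntY (swapP B) = cntX A by rewrite cntY_swap bX aX.
have [r1X r1Y] := comp_cnt h1.
have h2 : cntY (comp (swapP B) A) = cntX B by rewrite r1Y aY bX.
have [rX rY] := comp_cnt h2.
apply: leq_trans (selfed_le (p := comp (comp (swapP B) A) B) _) _.
- rewrite /is_self_alignment is_alignmentE rX rY r1X cntX_swap bY eqxx /=.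
  rewrite nsd_diags; apply/allP => -[a b] /= hab.
  have [c [hac hcb]] := diags_comp 0 h2 hab.
  have [d [had hdc]] := diags_comp 0 h1 hac.
  rewrite diags_swap in had.
  rewrite nsd_diags in nA; move/allP: nA => /(_ _ hdc) /= hdc'.
  apply/negP => /eqP eab; subst b.
  have edc := diags_inj had hcb.
  by rewrite edc eqxx in hdc'.
- have c1 := comp_cost Y X Y 0 0 0 h2.
  have c2 := comp_cost Y X X 0 0 0 h1.
  rewrite acost_swap in c2.
  move: cB cA; rewrite /cost => cB cA; lia.
Qed.
End P3.

Theorem lemma4p2 (T : eqType) (X : seq T) :
  (forall l' l r r' : nat, l' <= l -> l <= r -> r <= r' -> r' <= size X ->
     selfed (frag X l r) <= selfed (frag X l' r'))
  /\ (forall m : nat, m <= size X ->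
     selfed X <= selfed (frag X 0 m) + selfed (frag X m (size X)))
  /\ (forall Y : seq T, selfed Y <= selfed X + 2 * ed X Y).
Proof.
split; [|split].
- move=> l' l r r' h1 h2 h3 _; exact: part1.
- exact: part2.
- move=> Y; exact: part3.
Qed.
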